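(* Let $R$, $G$, $*$, $\sigma$ and $\mathcal{S}$ be as in the context, and suppose $\mathcal{S}$ is anticommutative. Then: - for all $x,y\in G$, we have $xy=yx$ if and only if $x^*y=yx^*$; - if moreover $x,y\in G\setminus G_*$ and $xy=yx$, then $xy=yx=x^*y^*=y^*x^*$ and $xy^*=y^*x=x^*y=yx^*$, and $2(1+\sigma(xy))=0=2(\sigma(x)+\sigma(y))$ in $R$.
   Context: Throughout, $R$ is a commutative ring with unity with $\operatorname{char}(R)\neq 2$, and $\mathcal{U}(R)$ is its unit group. $G$ is a group with an involution $*$, i.e. a map $x\mapsto x^*$ with $(xy)^*=y^*x^*$ and $(x^* )^*=x$. The map $\sigma:G\to\mathcal{U}(R)$ is a nontrivial group homomorphism with kernel $N=\ker\sigma$, and it is compatible with $*$: $xx^*\in N$ for all $x\in G$. The group ring $RG$ carries the involution $\left(\sum_{x\in G}\alpha_x x\right)^{\sigma*}=\sum_{x\in G}\sigma(x)\alpha_x x^*$. Write $G_*=\{x\in G: x^*=x\}$ and $N_*=G_*\cap N$. Let $\mathcal{S}$ be the $R$-submodule of $RG$ spanned by the union of the following three sets: - $2\mathcal{S}_1=\{2x: x\in N_*\}$; - $\mathcal{S}_2=\{\alpha x: x\in G_*\setminus N,\ \alpha\in R,\ \alpha(1-\sigma(x))=0\}$; - $\mathcal{S}_3=\{x+\sigma(x)x^*: x\in G\setminus G_*\}$. $\mathcal{S}$ is called anticommutative if $ab+ba=0$ for all $a,b\in\mathcal{S}$. *)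

(* Defs.v *)
From HB Require Import structures.
From mathcomp Require Import all_boot all_order all_algebra.
Set Implicit Arguments. Unset Strict Implicit. Unset Printing Implicit Defensive.
Import Order.TTheory GRing.Theory Num.Theory.
Local Open Scope ring_scope.

(* Elements of the group ring RG are
   represented by finite formal sums  [:: (a1, x1); ...; (an, xn)]
   meaning  a1 x1 + ... + an xn ; two representatives denote the same
   element of RG iff they have the same coefficient at every g in G. *)

Section GroupRing.
Variables (R : comNzRingType) (G : groupType).

Definition rg := seq (R * G).

Definition rg_coef (a : rg) (g : G) : R := \sum_(p <- a | p.2 == g) p.1.

Definition rg_eq (a b : rg) : Prop := forall g, rg_coef a g = rg_coef b g.

Definition rg_add (a b : rg) : rg := a ++ b.
Definition rg_scale (r : R) (a : rg) : rg := [seq (r * p.1, p.2) | p <- a].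
Definition rg_mul (a b : rg) : rg :=
  [seq (p.1 * q.1, (p.2 * q.2)%g) | p <- a, q <- b].

Variables (star : G -> G) (sigma : G -> R).

Definition Gstar (x : G) : Prop := star x = x.
Definition inN (x : G) : Prop := sigma x = 1.

Definition S_gen (a : rg) : Prop :=
  (exists x, Gstar x /\ inN x /\ a = [:: (2%:R, x)])
  \/ (exists x (al : R), Gstar x /\ ~ inN x /\ al * (1 - sigma x) = 0
                         /\ a = [:: (al, x)])
  \/ (exists x, ~ Gstar x /\ a = [:: (1, x); (sigma x, star x)]).

Inductive S_comb : rg -> Prop :=
  | S_comb0 : S_comb [::]
  | S_combS r a b : S_gen a -> S_comb b -> S_comb (rg_add (rg_scale r a) b).

Definition inS (a : rg) : Prop := exists b, S_comb b /\ rg_eq a b.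

Definition S_anticomm : Prop :=
  forall a b, inS a -> inS b -> rg_eq (rg_add (rg_mul a b) (rg_mul b a)) [::].

End GroupRing.

(* Main.v *)
Require Import Defs.
From HB Require Import structures.
From mathcomp Require Import all_boot all_order all_algebra.
From mathcomp Require Import ring.
Import Order.TTheory GRing.Theory Num.Theory.
Set Implicit Arguments. Unset Strict Implicit.
Local Open Scope ring_scope.

Section Aux.
Variables (R : comNzRingType) (G : groupType).

Lemma coef_nil (g : G) : rg_coef ([::] : rg R G) g = 0.
Proof. by rewrite /rg_coef big_nil. Qed.

Lemma coef_cons (a : R) (x : G) (l : rg R G) g :
  rg_coef ((a, x) :: l) g = (if x == g then a else 0) + rg_coef l g.
Proof. by rewrite /rg_coef big_cons /=; case: eqP; rewrite ?add0r. Qed.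

Lemma eqL (a b c : G) : (b == c) = false -> ((a * b)%g == (a * c)%g) = false.
Proof. by move=> H; apply/eqP => /mulgI E; rewrite E eqxx in H. Qed.

Lemma eqR (a b c : G) : (b == c) = false -> ((b * a)%g == (c * a)%g) = false.
Proof. by move=> H; apply/eqP => /mulIg E; rewrite E eqxx in H. Qed.

End Aux.

Section Main.
Variables (R : comNzRingType) (G : groupType)
  (star : G -> G) (sigma : G -> R)
  (hchar : 2%:R != 0 :> R)
  (hstarM : forall x y : G, star (x * y)%g = (star y * star x)%g)
  (hstarK : forall x : G, star (star x) = x)
  (hsigmaM : forall x y : G, sigma (x * y)%g = sigma x * sigma y)
  (hsigmaU : forall x : G, exists u : R, sigma x * u = 1)
  (hS : S_anticomm star sigma).

Definition sE (x : G) : rg R G := [:: (1, x); (sigma x, star x)].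

Lemma s_in x : ~ Gstar star x -> inS star sigma (sE x).
Proof.
move=> hx; exists (rg_add (rg_scale 1 (sE x)) [::]); split.
  apply: S_combS; last exact: S_comb0.
  by right; right; exists x.
by move=> g; rewrite /rg_add /rg_scale /= !mul1r.
Qed.

Lemma anti x y g : ~ Gstar star x -> ~ Gstar star y ->
  rg_coef (rg_add (rg_mul (sE x) (sE y)) (rg_mul (sE y) (sE x))) g = 0.
Proof.
move=> hx hy; have := hS (s_in hx) (s_in hy) g.
by rewrite coef_nil.
Qed.

Lemma two_neq (a : R) : a + a = 0 -> (exists u, a * u = 1) -> False.
Proof.
move=> H [u hu]; move/eqP: hchar; apply.
have : (a + a) * u = 2%:R by rewrite mulrDl hu.
by rewrite H mul0r => <-.
Qed.

Lemma nsym x : ~ Gstar star x -> (star x == x) = false /\ (x == star x) = false.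
Proof.
move=> hx; split; apply/eqP => E; apply: hx; first exact: E.
exact: (esym E).
Qed.

Lemma normal y : ~ Gstar star y ->
  (star y * y = y * star y)%g /\ (star y * star y = y * y)%g.
Proof.
move=> hy; have [n1 n2] := nsym hy.
split.
  case: (eqVneq (star y * y)%g (y * star y)%g) => // Hne.
  have := anti (y * star y)%g hy hy.
  rewrite /rg_add /rg_mul /= !coef_cons coef_nil.
  rewrite (eqL _ n2) eqxx (negbTE Hne) (eqR _ n1) => H.
  exfalso; apply: (@two_neq (sigma y)); last exact: hsigmaU.
  rewrite -[RHS]H; ring.
case: (eqVneq (star y * star y)%g (y * y)%g) => // Hne.
have := anti (y * y)%g hy hy.
rewrite /rg_add /rg_mul /= !coef_cons coef_nil.
rewrite eqxx (eqL _ n1) (eqR _ n1) (negbTE Hne) => H.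
exfalso; apply: (@two_neq 1); last by exists 1; rewrite mulr1.
rewrite -[RHS]H; ring.
Qed.

Lemma key x y : ~ Gstar star x -> ~ Gstar star y -> (x * y = y * x)%g ->
  (star x * star y = x * y)%g /\ 2%:R * (1 + sigma (x * y)%g) = 0 /\
  (star x * y = y * star x)%g /\ (x * star y = star x * y)%g.
Proof.
move=> hx hy Exy; have [nx1 nx2] := nsym hx; have [ny1 ny2] := nsym hy.
have [N1 N2] := normal hy.
have E1 : (star x * star y = star y * star x)%g by rewrite -!hstarM Exy.
have f1 : ((y * star x)%g == (x * y)%g) = false by rewrite Exy; exact: eqL.
have f2 : ((star y * x)%g == (x * y)%g) = false by rewrite Exy; exact: eqR.
have [E2 H2] : (star x * star y = x * y)%g /\ 2%:R * (1 + sigma (x * y)%g) = 0.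
  have := anti (x * y)%g hx hy.
  rewrite /rg_add /rg_mul /= !coef_cons coef_nil.
  rewrite eqxx (eqL _ ny1) (eqR _ nx1) f1 f2 -E1 -Exy eqxx.
  case: (eqVneq (star x * star y)%g (x * y)%g) => [E2|Hne] H.
    by split=> //; rewrite hsigmaM -[RHS]H; ring.
  exfalso; apply: (@two_neq 1); last by exists 1; rewrite mulr1.
  by rewrite -[RHS]H; ring.
have BC : (star x * y = y * star x)%g.
  apply: (@mulIg _ (star y)).
  have -> : (star x * y * star y = x * y * y)%g.
    rewrite -mulgA -N1 mulgA E2 //.
  by rewrite -[RHS]mulgA E2 mulgA Exy.
split=> //; split=> //; split=> //.
apply: (@mulIg _ (star y)).
rewrite -mulgA N2 mulgA -[RHS]mulgA -N1 [RHS]mulgA E2 //.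
Qed.

Lemma main_sec :
  (forall x y : G, (x * y = y * x)%g <-> (star x * y = y * star x)%g) /\
  (forall x y : G, ~ Gstar star x -> ~ Gstar star y -> (x * y = y * x)%g ->
     ( (x * y = y * x)%g /\ (y * x = star x * star y)%g /\
         (star x * star y = star y * star x)%g /\
         (x * star y = star y * x)%g /\ (star y * x = star x * y)%g /\
         (star x * y = y * star x)%g /\
         2%:R * (1 + sigma (x * y)%g) = 0 /\
         2%:R * (sigma x + sigma y) = 0)).
Proof.
have P2 : forall x y : G, ~ Gstar star x -> ~ Gstar star y -> (x * y = y * x)%g ->
     ( (x * y = y * x)%g /\ (y * x = star x * star y)%g /\
         (star x * star y = star y * star x)%g /\
         (x * star y = star y * x)%g /\ (star y * x = star x * y)%g /\
         (star x * y = y * star x)%g /\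
         2%:R * (1 + sigma (x * y)%g) = 0 /\
         2%:R * (sigma x + sigma y) = 0).
  move=> x y hx hy Exy.
  have [E2 [H2 [BC AB]]] := key hx hy Exy.
  have [F2 [_ [BC' AB']]] := key hy hx (esym Exy).
  have [ny1 ny2] := nsym hy.
  do 6 (split; first by rewrite ?E2 ?F2 ?Exy ?BC' ?AB //).
  split=> //.
  have := anti (x * star y)%g hx hy.
  rewrite /rg_add /rg_mul /= !coef_cons coef_nil.
  rewrite -AB AB' BC' E2 F2 -Exy eqxx (eqL _ ny2) => H.
  by rewrite -[RHS]H; ring.
split=> // x y.
case: (eqVneq (star x) x) => [Sx|Nx]; first by rewrite Sx.
case: (eqVneq (star y) y) => [Sy|Ny].
  split=> E.
    by have := congr1 star E; rewrite !hstarM Sy => ->.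
  by have := congr1 star E; rewrite !hstarM Sy hstarK => ->.
have hx : ~ Gstar star x by move=> E; rewrite /Gstar E eqxx in Nx.
have hy : ~ Gstar star y by move=> E; rewrite /Gstar E eqxx in Ny.
have hx' : ~ Gstar star (star x).
  by rewrite /Gstar hstarK => E; rewrite -E eqxx in Nx.
split=> E.
  by have [_ [_ [BC _]]] := key hx hy E.
have [_ [_ [BC _]]] := key hx' hy E.
by rewrite hstarK in BC.
Qed.

End Main.

Theorem lemma3p4 (R : comNzRingType) (G : groupType)
  (star : G -> G) (sigma : G -> R)
  (* char R <> 2  (R is nonzero) *)
  (hchar : 2%:R != 0 :> R)
  (* * is an involution on G *)
  (hstarM : forall x y : G, star (x * y)%g = (star y * star x)%g)
  (hstarK : forall x : G, star (star x) = x)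
  (* sigma : G -> U(R) is a group homomorphism *)
  (hsigmaM : forall x y : G, sigma (x * y)%g = sigma x * sigma y)
  (hsigmaU : forall x : G, exists u : R, sigma x * u = 1)
  (* sigma is nontrivial *)
  (hsigma_nt : exists x : G, sigma x != 1)
  (* compatibility with * : x x^* \in N *)
  (hcompat : forall x : G, sigma (x * star x)%g = 1)
  (* S is anticommutative *)
  (hS : S_anticomm star sigma) :
  (forall x y : G, (x * y = y * x)%g <-> (star x * y = y * star x)%g) /\
  (forall x y : G, ~ Gstar star x -> ~ Gstar star y -> (x * y = y * x)%g ->
     ( (x * y = y * x)%g /\ (y * x = star x * star y)%g /\
         (star x * star y = star y * star x)%g /\
         (x * star y = star y * x)%g /\ (star y * x = star x * y)%g /\
         (star x * y = y * star x)%g /\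
         2%:R * (1 + sigma (x * y)%g) = 0 /\
         2%:R * (sigma x + sigma y) = 0)).
Proof. exact: main_sec. Qed.
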